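(* Let $u:X\to\mathbb{R}$ be non-constant affine and let $\succ_1,\succ_2$ be hope-and-prepare preferences on $\mathcal{F}$ with unique representations $(u,C_1,D_1)$ and $(u,C_2,D_2)$ respectively. Then: (i) $\succ_1$ is more ambiguity averse than $\succ_2$ if and only if $C_2\subseteq C_1$; (ii) $\succ_1$ is more ambiguity loving than $\succ_2$ if and only if $D_2\subseteq D_1$.
   Context: $S$ is a set of states with algebra $\Sigma$; $X$ is a non-singleton convex subset of a real vector space; $\mathcal{F}$ is the set of simple acts $f:S\to X$; elements of $X$ are identified with constant acts; $\Delta$ is the set of finitely additive probability measures on $(S,\Sigma)$ with weak* topology. A hope-and-prepare preference with representation $(u,C,D)$ ($C,D\subseteq\Delta$ convex compact, $C\cap D\neq\emptyset$) is the relation: $f\succ g$ iff $\min_{p\in C}\int u(f)dp>\min_{p\in C}\int u(g)dp$ and $\max_{p\in D}\int u(f)dp>\max_{p\in D}\int u(g)dp$; unique representation means $C,D$ unique and $u$ unique up to positive affine transformation. $\succ_1$ is more ambiguity averse than $\succ_2$ if for all $f\in\mathcal{F}$, $x\in X$, $f\succ_1 x$ implies $f\succ_2 x$; $\succ_1$ is more ambiguity loving than $\succ_2$ if for all $f\in\mathcal{F}$, $x\in X$, $x\succ_1 f$ implies $x\succ_2 f$. *)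

(* Defs.v *)
From HB Require Import structures.
From mathcomp Require Import all_boot all_order all_algebra.
From mathcomp Require Import all_classical all_reals all_analysis.
Set Implicit Arguments. Unset Strict Implicit. Unset Printing Implicit Defensive.
Import Order.TTheory GRing.Theory Num.Theory numFieldNormedType.Exports.
Local Open Scope classical_set_scope.
Local Open Scope ring_scope.

Section HopePrepare.
Variables (R : realType) (V : lmodType R) (S : Type).

Definition is_algebra (Sigma : set (set S)) : Prop :=
  [/\ Sigma setT,
      (forall A, Sigma A -> Sigma (~` A)) &
      (forall A B, Sigma A -> Sigma B -> Sigma (A `|` B))].

Definition event (Sigma : set (set S)) := {A : set S | Sigma A}.

(* a set function on events, extended by 0 outside Sigma (only used to
   evaluate it on sets that are known to be events) *)
Definition pext (Sigma : set (set S)) (p : event Sigma -> R) (B : set S) : R :=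
  match pselect (Sigma B) with
  | left h => p (exist _ B h)
  | right _ => 0
  end.

Definition fa_prob (Sigma : set (set S)) (p : event Sigma -> R) : Prop :=
  [/\ pext p setT = 1,
      (forall A, Sigma A -> 0 <= pext p A) &
      (forall A B, Sigma A -> Sigma B -> A `&` B = set0 ->
         pext p (A `|` B) = pext p A + pext p B)].

Definition sint (Sigma : set (set S)) (p : event Sigma -> R) (g : S -> R) : R :=
  (\sum_(r \in range g) r * pext p (g @^-1` [set r]))%R.

Definition convex_set (X : set V) : Prop :=
  forall x y t, X x -> X y -> 0 <= t -> t <= 1 -> X (t *: x + (1 - t) *: y).

Definition is_act (Sigma : set (set S)) (X : set V) (f : S -> V) : Prop :=
  [/\ (forall s, X (f s)), finite_set (range f) &
      (forall x, Sigma (f @^-1` [set x]))].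

Definition cst_act (x : V) : S -> V := fun _ => x.

Definition affine_on (X : set V) (u : V -> R) : Prop :=
  forall x y t, X x -> X y -> 0 <= t -> t <= 1 ->
    u (t *: x + (1 - t) *: y) = t * u x + (1 - t) * u y.

(* sets of charges: convexity, and compactness for the weak* topology.
   On Delta the weak* topology sigma(ba(Sigma), B_0(Sigma)) is the topology of
   pointwise (setwise) convergence on events. *)
Definition convex_charges (Sigma : set (set S)) (C : set (event Sigma -> R)) : Prop :=
  forall p q t, C p -> C q -> 0 <= t -> t <= 1 ->
    C (fun A => t * p A + (1 - t) * q A).

Definition wstar_compact (Sigma : set (set S)) (C : set (event Sigma -> R)) : Prop :=
  @compact (prod_topology (fun _ : event Sigma => (R : topologicalType))) C.

(* min over C and max over D of the expected utility; C, D are compact and the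
   integrals continuous, so inf/sup are attained (min/max) *)
Definition minEU (Sigma : set (set S)) (C : set (event Sigma -> R))
  (u : V -> R) (f : S -> V) : R := inf [set sint p (u \o f) | p in C].
Definition maxEU (Sigma : set (set S)) (D : set (event Sigma -> R))
  (u : V -> R) (f : S -> V) : R := sup [set sint p (u \o f) | p in D].

Definition HP_rep (Sigma : set (set S)) (X : set V)
  (pref : (S -> V) -> (S -> V) -> Prop) (u : V -> R)
  (C D : set (event Sigma -> R)) : Prop :=
  [/\ affine_on X u,
      C `<=` fa_prob (Sigma:=Sigma) /\ D `<=` fa_prob (Sigma:=Sigma),
      (convex_charges C /\ convex_charges D) /\
      (wstar_compact C /\ wstar_compact D),
      C `&` D !=set0 &
      (forall f g, pref f g <->
        [/\ is_act Sigma X f, is_act Sigma X g,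
            minEU C u f > minEU C u g & maxEU D u f > maxEU D u g])].

Definition HP_unique_rep (Sigma : set (set S)) (X : set V)
  (pref : (S -> V) -> (S -> V) -> Prop) (u : V -> R)
  (C D : set (event Sigma -> R)) : Prop :=
  HP_rep X pref u C D /\
  (forall u' C' D', HP_rep X pref u' C' D' ->
     [/\ C' = C, D' = D &
         exists a b, 0 < a /\ forall x, X x -> u' x = a * u x + b]).

Definition more_ambiguity_averse (Sigma : set (set S)) (X : set V)
  (pref1 pref2 : (S -> V) -> (S -> V) -> Prop) : Prop :=
  forall f x, is_act Sigma X f -> X x -> pref1 f (cst_act x) -> pref2 f (cst_act x).

Definition more_ambiguity_loving (Sigma : set (set S)) (X : set V)
  (pref1 pref2 : (S -> V) -> (S -> V) -> Prop) : Prop :=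
  forall f x, is_act Sigma X f -> X x -> pref1 (cst_act x) f -> pref2 (cst_act x) f.

End HopePrepare.

(* Main.v *)
Require Import Defs.
From HB Require Import structures.
From mathcomp Require Import all_boot all_order all_algebra.
From mathcomp Require Import all_classical all_reals all_analysis.
Import Order.TTheory GRing.Theory Num.Theory numFieldNormedType.Exports.
Local Open Scope classical_set_scope.
Local Open Scope ring_scope.
From mathcomp Require Import ring lra.
Set Implicit Arguments. Unset Strict Implicit.

Section Basic.
Variables (R : realType) (V : lmodType R) (S : Type) (Sigma : set (set S)).
Hypothesis HSig : is_algebra Sigma.

Lemma Sig0 : Sigma set0.
Proof. by case: HSig => HT HC _; rewrite -setCT; exact: HC. Qed.

Lemma SigU A B : Sigma A -> Sigma B -> Sigma (A `|` B).
Proof. by case: HSig => _ _; apply. Qed.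

Lemma pext_ge0 (p : event Sigma -> R) : fa_prob p -> forall B, 0 <= pext p B.
Proof.
move=> [_ H _] B; case: (pselect (Sigma B)) => h; first exact: H.
by rewrite /pext; case: pselect.
Qed.

Lemma pext0 (p : event Sigma -> R) : fa_prob p -> pext p set0 = 0.
Proof.
move=> [_ _ H]; have := H set0 set0 Sig0 Sig0 (setIid _).
rewrite setUid => E; lra.
Qed.

Lemma level_seq (p : event Sigma -> R) (g : S -> R) : fa_prob p ->
  (forall r, Sigma (g @^-1` [set r])) -> forall s : seq R, uniq s ->
  Sigma (g @^-1` [set` s]) /\
  \sum_(r <- s) pext p (g @^-1` [set r]) = pext p (g @^-1` [set` s]).
Proof.
move=> hp hg; elim => [|r s IH] /=.
  have -> : g @^-1` [set` [::]] = set0 by apply/seteqP; split => x //=.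
  by rewrite big_nil pext0 //; split => //; exact: Sig0.
move=> /andP [rs us]; have [IH1 IH2] := IH us.
have E : g @^-1` [set` (r :: s)] = g @^-1` [set r] `|` g @^-1` [set` s].
  apply/seteqP; split => x /=; rewrite ?inE.
    by case/orP => [/eqP ->|]; [left|right].
  by case => [->|->]; rewrite ?eqxx ?orbT.
split; first by rewrite E; apply: SigU.
rewrite big_cons IH2 E; case: hp => _ _ hadd; rewrite hadd //.
apply/seteqP; split => x //= [->]; rewrite /= => h.
by move: rs; rewrite h.
Qed.

Lemma range_seq (g : S -> R) : finite_set (range g) ->
  exists s, uniq s /\ range g = [set` s].
Proof.
move/finite_seqP => [s E]; exists (undup s); split; first exact: undup_uniq.
by rewrite E; apply/seteqP; split => x /=; rewrite mem_undup.
Qed.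

Lemma sint_seq (p : event Sigma -> R) (g : S -> R) s : uniq s -> range g = [set` s] ->
  sint p g = \sum_(r <- s) r * pext p (g @^-1` [set r]).
Proof. by move=> us E; rewrite /sint E -fsbig_seq. Qed.

Definition simple (g : S -> R) :=
  (forall r, Sigma (g @^-1` [set r])) /\ finite_set (range g).

Lemma sum_one (p : event Sigma -> R) (g : S -> R) : fa_prob p -> simple g ->
  exists s, [/\ uniq s, range g = [set` s] &
    \sum_(r <- s) pext p (g @^-1` [set r]) = 1].
Proof.
move=> hp [hg hf]; have [s [us E]] := range_seq hf.
exists s; split => //; have [_ ->] := level_seq hp hg us.
rewrite -E; have -> : g @^-1` range g = setT.
  by apply/seteqP; split => x //= _; exists x.
by case: hp.
Qed.

Lemma sint_lb (p : event Sigma -> R) (g : S -> R) c : fa_prob p -> simple g ->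
  (forall x, c <= g x) -> c <= sint p g.
Proof.
move=> hp hs hc; have [s [us E s1]] := sum_one hp hs.
rewrite (sint_seq _ us E).
have -> : c = \sum_(r <- s) c * pext p (g @^-1` [set r]) by rewrite -mulr_sumr s1 mulr1.
rewrite big_seq [X in _ <= X]big_seq; apply: ler_sum => r rs.
apply: ler_wpM2r; first exact: pext_ge0.
have : range g r by rewrite E.
by case=> x _ <-.
Qed.

Lemma sint_ub (p : event Sigma -> R) (g : S -> R) c : fa_prob p -> simple g ->
  (forall x, g x <= c) -> sint p g <= c.
Proof.
move=> hp hs hc; have [s [us E s1]] := sum_one hp hs.
rewrite (sint_seq _ us E).
have -> : c = \sum_(r <- s) c * pext p (g @^-1` [set r]) by rewrite -mulr_sumr s1 mulr1.
rewrite big_seq [X in _ <= X]big_seq; apply: ler_sum => r rs.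
apply: ler_wpM2r; first exact: pext_ge0.
have : range g r by rewrite E.
by case=> x _ <-.
Qed.


Lemma pre_seq (f : S -> V) : (forall x, Sigma (f @^-1` [set x])) ->
  forall t : seq V, Sigma (f @^-1` [set` t]).
Proof.
move=> hf; elim => [|r s IH] /=.
  have -> : f @^-1` [set` [::]] = set0 by apply/seteqP; split => x //=.
  exact: Sig0.
have -> : f @^-1` [set` (r :: s)] = f @^-1` [set r] `|` f @^-1` [set` s].
  apply/seteqP; split => x /=; rewrite ?inE.
    by case/orP => [/eqP ->|]; [left|right].
  by case => [->|->]; rewrite ?eqxx ?orbT.
exact: SigU.
Qed.

Lemma act_simple (X : set V) (f : S -> V) (u : V -> R) :
  is_act Sigma X f -> simple (u \o f).
Proof.
move=> [_ hfin hlev]; split.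
  move=> r.
  have -> : (u \o f) @^-1` [set r] = f @^-1` (range f `&` u @^-1` [set r]).
    apply/seteqP; split => x /=.
      by move=> h; split => //; exists x.
    by case.
  have : finite_set (range f `&` u @^-1` [set r]) by exact: finite_setIl.
  by move/finite_seqP => [t ->]; exact: pre_seq.
have -> : range (u \o f) = u @` range f.
  by apply/seteqP; split => y /=; [case=> s _ <-; exists (f s) => //; exists s | case=> _ [s _ <-] <-; exists s].
exact: finite_image.
Qed.

Lemma cst_is_act (X : set V) x : X x -> is_act Sigma X (cst_act x).
Proof.
move=> Xx; split => //.
  apply: (@sub_finite_set _ _ [set x]); last exact: finite_set1.
  by move=> y [s _ <-].
move=> y; case: (pselect (x = y)) => [<-|nxy].
  have -> : @cst_act _ _ S x @^-1` [set x] = setT by apply/seteqP; split => s //=.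
  by case: HSig.
have -> : @cst_act _ _ S x @^-1` [set y] = set0.
  by apply/seteqP; split => s //=; rewrite /cst_act.
exact: Sig0.
Qed.

Lemma seq_bounds (s : seq R) : exists c d, forall r, r \in s -> c <= r <= d.
Proof.
elim: s => [|a s [c [d H]]]; first by exists 0, 0.
exists (Num.min a c), (Num.max a d) => r; rewrite inE => /orP [/eqP ->|/H].
  by rewrite ge_min le_max lexx.
by move=> /andP [h1 h2]; rewrite ge_min le_max h1 h2 !orbT.
Qed.

Lemma simple_bounds (g : S -> R) : simple g -> exists c d, forall x, c <= g x <= d.
Proof.
move=> [_ hf]; have [s [_ E]] := range_seq hf; have [c [d H]] := seq_bounds s.
exists c, d => x; apply: H.
have : range g (g x) by exists x.
by rewrite E.
Qed.

End Basic.

Section EU.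
Variables (R : realType) (V : lmodType R) (S : Type) (Sigma : set (set S)).
Hypothesis HSig : is_algebra Sigma.
Variables (X : set V) (u : V -> R).
Implicit Types (C : set (event Sigma -> R)) (f : S -> V).

Let EU C f := [set sint p (u \o f) | p in C].

Lemma EU_bnd C f : C `<=` @fa_prob R S Sigma -> is_act Sigma X f ->
  has_lbound (EU C f) /\ has_ubound (EU C f).
Proof.
move=> hC hf; have hs := act_simple HSig u hf.
have [c [d H]] := simple_bounds hs.
split; [exists c | exists d] => _ [p Cp <-].
  by apply: (sint_lb HSig (hC _ Cp) hs) => x; case/andP: (H x).
by apply: (sint_ub HSig (hC _ Cp) hs) => x; case/andP: (H x).
Qed.

Lemma minEU_le C f p : C `<=` @fa_prob R S Sigma -> is_act Sigma X f -> C p ->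
  minEU C u f <= sint p (u \o f).
Proof.
move=> hC hf Cp; have [hl _] := EU_bnd hC hf.
by apply: (ge_inf hl); exists p.
Qed.

Lemma le_maxEU C f p : C `<=` @fa_prob R S Sigma -> is_act Sigma X f -> C p ->
  sint p (u \o f) <= maxEU C u f.
Proof.
move=> hC hf Cp; have [_ hu] := EU_bnd hC hf.
by apply: (ub_le_sup hu); exists p.
Qed.

Lemma minEU_ge C f c : C !=set0 ->
  (forall p, C p -> c <= sint p (u \o f)) -> c <= minEU C u f.
Proof.
move=> [p0 Cp0] H; apply: lb_le_inf; first by exists (sint p0 (u \o f)), p0.
by move=> _ [p Cp <-]; apply: H.
Qed.

Lemma maxEU_le C f c : C !=set0 ->
  (forall p, C p -> sint p (u \o f) <= c) -> maxEU C u f <= c.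
Proof.
move=> [p0 Cp0] H; apply: ge_sup; first by exists (sint p0 (u \o f)), p0.
by move=> _ [p Cp <-]; apply: H.
Qed.

Lemma sint_cst (p : event Sigma -> R) x : fa_prob p -> X x -> sint p (u \o @cst_act _ _ S x) = u x.
Proof.
move=> hp Xx; have hs := act_simple HSig u (cst_is_act HSig Xx).
by apply/le_anti; rewrite sint_ub ?sint_lb.
Qed.

Lemma minEU_cst C x : C `<=` @fa_prob R S Sigma -> C !=set0 -> X x ->
  minEU C u (cst_act x) = u x.
Proof.
move=> hC [p Cp] Xx; apply/le_anti; apply/andP; split.
  by rewrite -(sint_cst (hC _ Cp) Xx); apply: minEU_le => //; exact: cst_is_act.
by apply: minEU_ge; [exists p | move=> q Cq; rewrite sint_cst //; exact: hC].
Qed.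

Lemma maxEU_cst C x : C `<=` @fa_prob R S Sigma -> C !=set0 -> X x ->
  maxEU C u (cst_act x) = u x.
Proof.
move=> hC [p Cp] Xx; apply/le_anti; apply/andP; split.
  by apply: maxEU_le; [exists p | move=> q Cq; rewrite sint_cst //; exact: hC].
by rewrite -(sint_cst (hC _ Cp) Xx); apply: le_maxEU => //; exact: cst_is_act.
Qed.

End EU.

Lemma eval_cont {I : Type} (T : I -> topologicalType) (i : I) :
  continuous (fun g : prod_topology T => g i).
Proof.
move=> g.
have H := (proj1 (@cvg_sup _ _ _ (nbhs g) g (nbhs_filter g))) (@cvg_id _ (nbhs g)) i.
move=> U /= HU.
exact: (H _ (@initial_continuous _ (T i) (fun h : (forall j, T j) => h i) g U HU)).
Qed.

Lemma prod_cont {X : topologicalType} {I : Type} (T : I -> topologicalType)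
  (f : X -> prod_topology T) : (forall i, continuous (fun x => f x i)) -> continuous f.
Proof.
move=> H x; apply/cvg_sup => i.
have := @continuous_comp_initial _ X (T i) (fun g : (forall j, T j) => g i) f (H i).
by apply.
Qed.

Lemma split_weights (R : realType) (a b : R) : 0 <= a -> 0 <= b ->
  exists l, [/\ (a + b) * l = a, (a + b) * (1 - l) = b & 0 <= l <= 1].
Proof.
move=> a0 b0; have [ab0|abn] := eqVneq (a + b) 0.
  exists 1; rewrite ab0 !mul0r; split; try lra.
have abp : 0 < a + b by rewrite lt_def abn addr_ge0.
exists (a / (a + b)); split.
- by field.
- by field; rewrite abn.
- apply/andP; split; first by rewrite divr_ge0 // ltW.
  by rewrite ler_pdivrMr // mul1r lerDl.
Qed.

Section Hull.
Variables (R : realType) (S : Type) (Sigma : set (set S)).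
Let PT := prod_topology (fun _ : event Sigma => (R : topologicalType)).

Definition combF (z : (PT * PT) * R) : PT :=
  fun A => z.2 * z.1.1 A + (1 - z.2) * z.1.2 A.

Lemma combF_cont : continuous combF.
Proof.
apply: prod_cont => A z.
apply: cvgD; apply: cvgM.
- exact: cvg_snd.
- apply: (@continuous_comp _ _ _ (fun z : (PT*PT)*R => z.1.1) (fun g : PT => g A)).
  + apply: (@continuous_comp _ _ _ fst fst); [exact: cvg_fst | exact: cvg_fst].
  + exact: eval_cont.
- apply: cvgB; [exact: cvg_cst | exact: cvg_snd].
- apply: (@continuous_comp _ _ _ (fun z : (PT*PT)*R => z.1.2) (fun g : PT => g A)).
  + apply: (@continuous_comp _ _ _ fst snd); [exact: cvg_fst | exact: cvg_snd].
  + exact: eval_cont.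
Qed.

Definition hull (A B : set PT) : set PT :=
  combF @` ((A `*` B) `*` `[0, 1]%classic).

Lemma pext_comb (p q : PT) t B :
  pext (combF ((p, q), t)) B = t * pext p B + (1 - t) * pext q B.
Proof. by rewrite /pext; case: pselect => h //; rewrite !mulr0 addr0. Qed.

Lemma itv01 (t : R) : `[0, 1]%classic t <-> 0 <= t <= 1.
Proof. by rewrite /= in_itv. Qed.

Lemma hull_fa (A B : set PT) : A `<=` @fa_prob R S Sigma -> B `<=` @fa_prob R S Sigma ->
  hull A B `<=` @fa_prob R S Sigma.
Proof.
move=> hA hB _ [[[p q] t] [[/= Ap Bq] /itv01 /andP [t0 t1]] <-].
have [p1 p2 p3] := hA _ Ap; have [q1 q2 q3] := hB _ Bq.
split.
- by rewrite pext_comb p1 q1; lra.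
- move=> E hE; rewrite pext_comb; apply: addr_ge0; apply: mulr_ge0 => //.
  + exact: p2.
  + by rewrite subr_ge0.
  + exact: q2.
- move=> E F hE hF hEF; rewrite !pext_comb p3 // q3 //; lra.
Qed.

Lemma hull_l (A B : set PT) : B !=set0 -> A `<=` hull A B.
Proof.
move=> [q Bq] p Ap; exists ((p, q), 1); first by split => //; apply/itv01; rewrite lexx ler01.
by apply: funext => E; rewrite /combF /= subrr mul0r addr0 mul1r.
Qed.

Lemma hull_r (A B : set PT) : A !=set0 -> B `<=` hull A B.
Proof.
move=> [p Ap] q Bq; exists ((p, q), 0); first by split => //; apply/itv01; rewrite lexx ler01.
by apply: funext => E; rewrite /combF /= subr0 mul0r add0r mul1r.
Qed.

Lemma hull_compact (A B : set PT) : wstar_compact A -> wstar_compact B ->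
  wstar_compact (hull A B).
Proof.
move=> cA cB; rewrite /wstar_compact /hull.
apply: continuous_compact.
  by apply: continuous_subspaceT => z; exact: combF_cont.
apply: compact_setX; first exact: compact_setX.
exact: segment_compact.
Qed.

Lemma hull_convex (A B : set PT) : convex_charges A -> convex_charges B ->
  convex_charges (hull A B).
Proof.
move=> cvA cvB h1 h2 s [[[p1 q1] t1] [[/= Ap1 Bq1] /itv01 /andP [t10 t11]] <-]
  [[[p2 q2] t2] [[/= Ap2 Bq2] /itv01 /andP [t20 t21]] <-] s0 s1.
have [l [l1 l2 /andP [l0 l1']]] : exists l, [/\ (s * t1 + (1 - s) * t2) * l = s * t1,
   (s * t1 + (1 - s) * t2) * (1 - l) = (1 - s) * t2 & 0 <= l <= 1].
  by apply: split_weights; apply: mulr_ge0 => //; rewrite subr_ge0.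
have [m [m1 m2 /andP [m0 m1']]] : exists m,
   [/\ (s * (1 - t1) + (1 - s) * (1 - t2)) * m = s * (1 - t1),
   (s * (1 - t1) + (1 - s) * (1 - t2)) * (1 - m) = (1 - s) * (1 - t2) & 0 <= m <= 1].
  by apply: split_weights; apply: mulr_ge0 => //; rewrite subr_ge0.
have ea : 1 - (s * t1 + (1 - s) * t2) = s * (1 - t1) + (1 - s) * (1 - t2) by ring.
exists (((fun E => l * p1 E + (1 - l) * p2 E), (fun E => m * q1 E + (1 - m) * q2 E)),
        s * t1 + (1 - s) * t2).
  split; first split => /=.
  - exact: cvA.
  - exact: cvB.
  apply/itv01; apply/andP; split; first by apply: addr_ge0; apply: mulr_ge0 => //; rewrite subr_ge0.
  by rewrite -subr_ge0 ea; apply: addr_ge0; apply: mulr_ge0 => //; rewrite subr_ge0.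
apply: funext => E; rewrite /combF /= ea.
set a := s * t1 + (1 - s) * t2 in l1 l2 *.
set b := s * (1 - t1) + (1 - s) * (1 - t2) in m1 m2 *.
transitivity ((a * l) * p1 E + (a * (1 - l)) * p2 E + (b * m) * q1 E + (b * (1 - m)) * q2 E).
  by ring.
rewrite l1 l2 m1 m2; ring.
Qed.

Lemma sint_comb (p q : PT) t (g : S -> R) : finite_set (range g) ->
  sint (combF ((p, q), t)) g = t * sint p g + (1 - t) * sint q g.
Proof.
move=> hf; have [s [us E]] := range_seq hf.
rewrite !(sint_seq _ us E) !mulr_sumr -big_split /=; apply: eq_bigr => r _.
by rewrite pext_comb; ring.
Qed.

End Hull.

Section Main.
Variables (R : realType) (V : lmodType R) (S : Type) (Sigma : set (set S)).
Hypothesis HSig : is_algebra Sigma.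
Variables (X : set V) (u : V -> R).
Hypothesis hconv : convex_set X.
Hypothesis haff : affine_on X u.

Lemma interp (f : S -> V) a b : is_act Sigma X f -> a < b ->
  (exists s1, u (f s1) < b) -> (exists s2, a < u (f s2)) ->
  exists x, X x /\ a < u x < b.
Proof.
move=> [hX _ _] ab [s1 h1] [s2 h2].
case: (ltP a (u (f s1))) => h1'; first by exists (f s1); rewrite h1' h1.
case: (ltP (u (f s2)) b) => h2'; first by exists (f s2); rewrite h2' h2.
set u1 := u (f s1) in h1 h1'; set u2 := u (f s2) in h2 h2'.
have d0 : 0 < u2 - u1 by rewrite subr_gt0; lra.
set t := ((a + b) / 2 - u1) / (u2 - u1).
have tE : t * (u2 - u1) = (a + b) / 2 - u1 by rewrite /t divfK // gt_eqF.
have t0 : 0 <= t by rewrite /t divr_ge0 //; [lra | exact: ltW].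
have t1 : t <= 1 by rewrite /t ler_pdivrMr // mul1r; lra.
exists (t *: f s2 + (1 - t) *: f s1); split.
  have := hconv (Itv01 t0 t1) (mem_set (hX s2)) (mem_set (hX s1)).
  by rewrite inE.
have -> : u (t *: f s2 + (1 - t) *: f s1) = t * u2 + (1 - t) * u1 by exact: haff.
have -> : t * u2 + (1 - t) * u1 = t * (u2 - u1) + u1 by ring.
rewrite tE; apply/andP; split; lra.
Qed.


Lemma averse_min pref1 pref2 (C1 D1 C2 D2 : set (event Sigma -> R)) :
  HP_rep X pref1 u C1 D1 -> HP_rep X pref2 u C2 D2 ->
  more_ambiguity_averse Sigma X pref1 pref2 ->
  forall f, is_act Sigma X f -> minEU C1 u f <= minEU C2 u f.
Proof.
move=> rep1 rep2 hav f hf.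
case: rep1 => _ [hC1 hD1] _ [q1 [Cq1 Dq1]] hp1.
case: rep2 => _ [hC2 hD2] _ [q2 [Cq2 Dq2]] hp2.
have hs := act_simple HSig u hf.
rewrite leNgt; apply/negP => hlt.
have ex1 : exists s1, u (f s1) < minEU C1 u f.
  case: (pselect (exists s1, u (f s1) < minEU C1 u f)) => // nex.
  have : minEU C1 u f <= minEU C2 u f.
    apply: minEU_ge; first by exists q2.
    move=> p Cp; apply: (sint_lb HSig (hC2 _ Cp) hs) => x /=.
    by rewrite leNgt; apply/negP => h; apply: nex; exists x.
  by rewrite leNgt hlt.
have ex2 : exists s2, minEU C2 u f < u (f s2).
  case: (pselect (exists s2, minEU C2 u f < u (f s2))) => // nex.
  have : minEU C1 u f <= minEU C2 u f.
    apply: le_trans (minEU_le HSig u hC1 hf Cq1) _.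
    apply: (sint_ub HSig (hC1 _ Cq1) hs) => x /=.
    by rewrite leNgt; apply/negP => h; apply: nex; exists x.
  by rewrite leNgt hlt.
have [x [Xx /andP [ax xb]]] := interp hf hlt ex1 ex2.
have hcx := cst_is_act HSig Xx.
have : pref1 f (cst_act x).
  apply/hp1; split => //.
    by rewrite (minEU_cst HSig u hC1 _ Xx) //; exists q1.
  rewrite (maxEU_cst HSig u hD1 _ Xx); last by exists q1.
  apply: lt_le_trans xb _; apply: le_trans (minEU_le HSig u hC1 hf Cq1) _.
  exact: (le_maxEU HSig u hD1 hf Dq1).
move/(hav _ _ hf Xx)/hp2 => [_ _ + _].
rewrite (minEU_cst HSig u hC2 _ Xx); last by exists q2.
move=> h; lra.
Qed.

Lemma loving_max pref1 pref2 (C1 D1 C2 D2 : set (event Sigma -> R)) :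
  HP_rep X pref1 u C1 D1 -> HP_rep X pref2 u C2 D2 ->
  more_ambiguity_loving Sigma X pref1 pref2 ->
  forall f, is_act Sigma X f -> maxEU D2 u f <= maxEU D1 u f.
Proof.
move=> rep1 rep2 hlv f hf.
case: rep1 => _ [hC1 hD1] _ [q1 [Cq1 Dq1]] hp1.
case: rep2 => _ [hC2 hD2] _ [q2 [Cq2 Dq2]] hp2.
have hs := act_simple HSig u hf.
rewrite leNgt; apply/negP => hlt.
have ex1 : exists s1, u (f s1) < maxEU D2 u f.
  case: (pselect (exists s1, u (f s1) < maxEU D2 u f)) => // nex.
  have : maxEU D2 u f <= maxEU D1 u f.
    apply: le_trans _ (le_maxEU HSig u hD1 hf Dq1).
    apply: (sint_lb HSig (hD1 _ Dq1) hs) => x /=.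
    by rewrite leNgt; apply/negP => h; apply: nex; exists x.
  by rewrite leNgt hlt.
have ex2 : exists s2, maxEU D1 u f < u (f s2).
  case: (pselect (exists s2, maxEU D1 u f < u (f s2))) => // nex.
  have : maxEU D2 u f <= maxEU D1 u f.
    apply: maxEU_le; first by exists q2.
    move=> p Dp; apply: (sint_ub HSig (hD2 _ Dp) hs) => x /=.
    by rewrite leNgt; apply/negP => h; apply: nex; exists x.
  by rewrite leNgt hlt.
have [x [Xx /andP [ax xb]]] := interp hf hlt ex1 ex2.
have hcx := cst_is_act HSig Xx.
have : pref1 (cst_act x) f.
  apply/hp1; split => //; last first.
    by rewrite (maxEU_cst HSig u hD1 _ Xx) //; exists q1.
  rewrite (minEU_cst HSig u hC1 _ Xx); last by exists q1.
  apply: le_lt_trans ax; apply: le_trans (minEU_le HSig u hC1 hf Cq1) _.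
  exact: (le_maxEU HSig u hD1 hf Dq1).
move/(hlv _ _ hf Xx)/hp2 => [_ _ _].
rewrite (maxEU_cst HSig u hD2 _ Xx); last by exists q2.
move=> h; lra.
Qed.


Lemma averse_of_sub pref1 pref2 (C1 D1 C2 D2 : set (event Sigma -> R)) :
  HP_rep X pref1 u C1 D1 -> HP_rep X pref2 u C2 D2 ->
  C2 `<=` C1 -> more_ambiguity_averse Sigma X pref1 pref2.
Proof.
move=> rep1 rep2 sub f x hf Xx.
case: rep1 => _ [hC1 hD1] _ [q1 [Cq1 Dq1]] hp1.
case: rep2 => _ [hC2 hD2] _ [q2 [Cq2 Dq2]] hp2.
move/hp1 => [_ hcx h1 h2]; apply/hp2; split => //.
  rewrite (minEU_cst HSig u hC2 _ Xx); last by exists q2.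
  rewrite (minEU_cst HSig u hC1 _ Xx) in h1; last by exists q1.
  apply: lt_le_trans h1 _; apply: minEU_ge; first by exists q2.
  by move=> p Cp; apply: (minEU_le HSig u hC1 hf (sub _ Cp)).
rewrite (maxEU_cst HSig u hD2 _ Xx); last by exists q2.
rewrite (minEU_cst HSig u hC1 _ Xx) in h1; last by exists q1.
apply: lt_le_trans h1 _; apply: le_trans (minEU_le HSig u hC1 hf (sub _ Cq2)) _.
exact: (le_maxEU HSig u hD2 hf Dq2).
Qed.

Lemma loving_of_sub pref1 pref2 (C1 D1 C2 D2 : set (event Sigma -> R)) :
  HP_rep X pref1 u C1 D1 -> HP_rep X pref2 u C2 D2 ->
  D2 `<=` D1 -> more_ambiguity_loving Sigma X pref1 pref2.
Proof.
move=> rep1 rep2 sub f x hf Xx.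
case: rep1 => _ [hC1 hD1] _ [q1 [Cq1 Dq1]] hp1.
case: rep2 => _ [hC2 hD2] _ [q2 [Cq2 Dq2]] hp2.
move/hp1 => [hcx _ h1 h2]; apply/hp2; split => //.
  rewrite (minEU_cst HSig u hC2 _ Xx); last by exists q2.
  rewrite (maxEU_cst HSig u hD1 _ Xx) in h2; last by exists q1.
  apply: le_lt_trans h2; apply: le_trans (minEU_le HSig u hC2 hf Cq2) _.
  exact: (le_maxEU HSig u hD1 hf (sub _ Dq2)).
rewrite (maxEU_cst HSig u hD2 _ Xx); last by exists q2.
rewrite (maxEU_cst HSig u hD1 _ Xx) in h2; last by exists q1.
apply: le_lt_trans h2; apply: maxEU_le; first by exists q2.
by move=> p Dp; apply: (le_maxEU HSig u hD1 hf (sub _ Dp)).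
Qed.

Lemma sub_of_averse pref1 pref2 (C1 D1 C2 D2 : set (event Sigma -> R)) :
  HP_unique_rep X pref1 u C1 D1 -> HP_rep X pref2 u C2 D2 ->
  more_ambiguity_averse Sigma X pref1 pref2 -> C2 `<=` C1.
Proof.
move=> [rep1 uniq1] rep2 hav.
have hmin := averse_min rep1 rep2 hav.
case: rep1 => haff' [hC1 hD1] [[cvC1 cvD1] [kC1 kD1]] [q1 [Cq1 Dq1]] hp1.
case: rep2 => _ [hC2 hD2] [[cvC2 cvD2] [kC2 kD2]] [q2 [Cq2 Dq2]] hp2.
have hHfa := hull_fa hC1 hC2.
have hH1 : C1 `<=` hull C1 C2 by apply: hull_l; exists q2.
have hminH : forall f, is_act Sigma X f -> minEU (hull C1 C2) u f = minEU C1 u f.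
  move=> f hf; apply/le_anti/andP; split.
    apply: minEU_ge; first by exists q1.
    by move=> p Cp; apply: (minEU_le HSig u hHfa hf (hH1 _ Cp)).
  apply: minEU_ge; first by exists q1; exact: hH1.
  move=> _ [[[p q] t] [[/= Cp Cq] /itv01 /andP [t0 t1]] <-].
  have [_ hfin] := act_simple HSig u hf.
  rewrite sint_comb //.
  have a := minEU_le HSig u hC1 hf Cp.
  have b := le_trans (hmin f hf) (minEU_le HSig u hC2 hf Cq).
  nra.
have rep : HP_rep X pref1 u (hull C1 C2) D1.
  split; first done; first by split.
  - by split; split => //; [exact: hull_convex | exact: hull_compact].
  - by exists q1; split => //; exact: hH1.
  move=> f g; rewrite hp1; split => -[hf hg h1 h2]; split => //.
    by rewrite !hminH.
  by rewrite -!hminH.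
have [eqH _ _] := uniq1 u (hull C1 C2) D1 rep.
by move=> q Cq; rewrite -eqH; apply: hull_r => //; exists q1.
Qed.

Lemma sub_of_loving pref1 pref2 (C1 D1 C2 D2 : set (event Sigma -> R)) :
  HP_unique_rep X pref1 u C1 D1 -> HP_rep X pref2 u C2 D2 ->
  more_ambiguity_loving Sigma X pref1 pref2 -> D2 `<=` D1.
Proof.
move=> [rep1 uniq1] rep2 hlv.
have hmax := loving_max rep1 rep2 hlv.
case: rep1 => haff' [hC1 hD1] [[cvC1 cvD1] [kC1 kD1]] [q1 [Cq1 Dq1]] hp1.
case: rep2 => _ [hC2 hD2] [[cvC2 cvD2] [kC2 kD2]] [q2 [Cq2 Dq2]] hp2.
have hHfa := hull_fa hD1 hD2.
have hH1 : D1 `<=` hull D1 D2 by apply: hull_l; exists q2.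
have hmaxH : forall f, is_act Sigma X f -> maxEU (hull D1 D2) u f = maxEU D1 u f.
  move=> f hf; apply/le_anti/andP; split; last first.
    apply: maxEU_le; first by exists q1.
    by move=> p Cp; apply: (le_maxEU HSig u hHfa hf (hH1 _ Cp)).
  apply: maxEU_le; first by exists q1; exact: hH1.
  move=> _ [[[p q] t] [[/= Cp Cq] /itv01 /andP [t0 t1]] <-].
  have [_ hfin] := act_simple HSig u hf.
  rewrite sint_comb //.
  have a := le_maxEU HSig u hD1 hf Cp.
  have b := le_trans (le_maxEU HSig u hD2 hf Cq) (hmax f hf).
  nra.
have rep : HP_rep X pref1 u C1 (hull D1 D2).
  split; first done; first by split.
  - by split; split => //; [exact: hull_convex | exact: hull_compact].
  - by exists q1; split => //; exact: hH1.
  move=> f g; rewrite hp1; split => -[hf hg h1 h2]; split => //.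
    by rewrite !hmaxH.
  by rewrite -!hmaxH.
have [_ eqH _] := uniq1 u C1 (hull D1 D2) rep.
by move=> q Dq; rewrite -eqH; apply: hull_r => //; exists q1.
Qed.

End Main.

Unset Implicit Arguments.

Theorem proposition2 (R : realType) (V : lmodType R) (S : Type)
  (Sigma : set (set S)) (X : set V) (u : V -> R)
  (pref1 pref2 : (S -> V) -> (S -> V) -> Prop)
  (C1 D1 C2 D2 : set (event Sigma -> R)) :
  is_algebra Sigma ->
  convex_set X ->
  (exists x y, X x /\ X y /\ x <> y) ->
  affine_on X u ->
  (exists x y, X x /\ X y /\ u x <> u y) ->
  HP_unique_rep X pref1 u C1 D1 ->
  HP_unique_rep X pref2 u C2 D2 ->
  (more_ambiguity_averse Sigma X pref1 pref2 <-> C2 `<=` C1) /\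
  (more_ambiguity_loving Sigma X pref1 pref2 <-> D2 `<=` D1).
Proof.
move=> HSig hconv _ haff _ hu1 hu2.
have rep1 := hu1.1; have rep2 := hu2.1.
split; split.
- exact: (sub_of_averse HSig hconv haff hu1 rep2).
- exact: (averse_of_sub HSig rep1 rep2).
- exact: (sub_of_loving HSig hconv haff hu1 rep2).
- exact: (loving_of_sub HSig rep1 rep2).
Qed.
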